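(* Let $\Gamma:\Delta\to\mathbb{R}_+$ with $\Gamma(s,s)>0$ for all $s\ge0$, and let $\rho$ be a Borel measure on $\mathbb{R}_+$ finite on compact sets. Then $\Gamma$ preserves nonnegativity if and only if $\Gamma^\rho(t,s)=\Gamma(t,s)e^{-\rho((s,t])}$ preserves nonnegativity.
   Context: $\Delta=\{(t,s):0\le s\le t\}$. A kernel $\Gamma:\Delta\to\mathbb{R}_+$ preserves nonnegativity if for every $T>0$, $K\in\mathbb{N}^*$, $x_1,\dots,x_K\in\mathbb{R}$ and $0\le t_1<\dots<t_K<T$ with $\sum_{k'=1}^kx_{k'}\Gamma(t_k,t_{k'})\ge0$ for all $k$, one has $\sum_{k:t_k\le t}x_k\Gamma(t,t_k)\ge0$ for all $t\in[0,T]$. *)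

(* Defs.v *)
From HB Require Import structures.
From mathcomp Require Import all_boot all_order all_algebra.
From mathcomp Require Import all_classical all_reals all_analysis.
Set Implicit Arguments. Unset Strict Implicit. Unset Printing Implicit Defensive.
Import Order.TTheory GRing.Theory Num.Theory.
Local Open Scope ring_scope.
Local Open Scope classical_set_scope.

(* A kernel Gamma on Delta = {(t,s) : 0 <= s <= t}, represented as a function
   R -> R -> R of which only the values on Delta are ever used. *)
Definition preserves_nonneg (R : realType) (Gamma : R -> R -> R) : Prop :=
  forall (T : R) (K : nat) (x : 'I_K -> R) (tt : 'I_K -> R),
    0 < T -> (0 < K)%N ->
    (forall k : 'I_K, 0 <= tt k /\ tt k < T) ->
    (forall i j : 'I_K, (i < j)%N -> tt i < tt j) ->
    (forall k : 'I_K,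
        0 <= \sum_(k' < K | (k' <= k)%N) x k' * Gamma (tt k) (tt k')) ->
    forall t : R, 0 <= t <= T ->
      0 <= \sum_(k < K | tt k <= t) x k * Gamma t (tt k).

Definition Gamma_rho (R : realType) (Gamma : R -> R -> R)
  (rho : {measure set R -> \bar R}) : R -> R -> R :=
  fun t s => Gamma t s * expR (- fine (rho `]s, t]%classic)).

(* Main.v *)
Require Import Defs.
From HB Require Import structures.
From mathcomp Require Import all_boot all_order all_algebra.
From mathcomp Require Import all_classical all_reals all_analysis.
From mathcomp Require Import ring lra.
Import Order.TTheory GRing.Theory Num.Theory.
Local Open Scope ring_scope.
Local Open Scope classical_set_scope.

Lemma transfer (R : realType) (G1 G2 : R -> R -> R) (a b : R -> R) :
  (forall t, 0 <= t -> 0 < a t) ->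
  (forall t s, 0 <= s -> s <= t -> G2 t s = a t * (G1 t s * b s)) ->
  preserves_nonneg G1 -> preserves_nonneg G2.
Proof.
move=> apos eqG H1 T K x tt T0 K0 ttr ttinc hyp t /andP[t0 tT].
pose y k := x k * b (tt k).
have mono : forall i j : 'I_K, (i <= j)%N -> tt i <= tt j.
  move=> i j; rewrite leq_eqVlt => /orP[/eqP/val_inj -> //| /ttinc/ltW //].
have tin : 0 <= t <= T by rewrite t0 tT.
have hy : forall k : 'I_K,
    0 <= \sum_(k' < K | (k' <= k)%N) y k' * G1 (tt k) (tt k'); last first.
  have H := H1 T K y tt T0 K0 ttr ttinc hy t tin.
  have -> : \sum_(k < K | tt k <= t) x k * G2 t (tt k) =
            a t * \sum_(k < K | tt k <= t) y k * G1 t (tt k).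
    rewrite mulr_sumr; apply: eq_bigr => k hk.
    rewrite eqG //; last by case: (ttr k).
    rewrite /y; ring.
  by apply: mulr_ge0 => //; apply/ltW/apos.
move=> k; have := hyp k.
have -> : \sum_(k' < K | (k' <= k)%N) x k' * G2 (tt k) (tt k') =
          a (tt k) * \sum_(k' < K | (k' <= k)%N) y k' * G1 (tt k) (tt k').
  rewrite mulr_sumr; apply: eq_bigr => k' hk.
  rewrite eqG //; [rewrite /y; ring | by case: (ttr k') | exact: mono].
by rewrite pmulr_rge0 // apos //; case: (ttr k).
Qed.

Lemma rho_split (R : realType) (rho : {measure set R -> \bar R}) (s t : R) :
  0 <= s -> s <= t ->
  (rho [set x : R | (0 <= x <= t)%R] < +oo)%E ->
  fine (rho `]s, t]) = fine (rho [set x : R | (0 <= x <= t)%R])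
                       - fine (rho [set x : R | (0 <= x <= s)%R]).
Proof.
move=> s0 st fin.
have eqU : [set x : R | (0 <= x <= t)%R] =
           [set x : R | (0 <= x <= s)%R] `|` `]s, t].
  apply/seteqP; split => x /=.
    move=> /andP[x0 xt]; case: (leP x s) => xs.
      by left; apply/andP.
    by right; rewrite /= in_itv /= xs xt.
  case=> [/andP[x0 xs]|]; first by rewrite x0 (le_trans xs st).
  rewrite in_itv /= => /andP[sx xt].
  by rewrite xt andbT (le_trans s0 (ltW sx)).
have m1 : measurable [set x : R | (0 <= x <= s)%R].
  have -> : [set x : R | (0 <= x <= s)%R] = `[0, s] by apply/seteqP; split => x /=; rewrite in_itv.
  exact: measurable_itv.
have dis : [set x : R | (0 <= x <= s)%R] `&` `]s, t] = set0.
  apply/seteqP; split => x //= [/andP[_ xs]]; rewrite in_itv /= => /andP[sx _].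
  by move: (lt_le_trans sx xs); rewrite ltxx.
have := measureU rho m1 (measurable_itv _) dis; rewrite -eqU => e.
rewrite e in fin *.
have f1 : (rho [set x : R | (0 <= x <= s)%R] \is a fin_num)%E.
  rewrite ge0_fin_numE //; apply: le_lt_trans fin.
  by rewrite leeDl.
have f2 : (rho `]s, t] \is a fin_num)%E.
  rewrite ge0_fin_numE //; apply: le_lt_trans fin.
  by rewrite leeDr.
rewrite fineD //; ring.
Qed.

Theorem mainTheorem17 (R : realType) (Gamma : R -> R -> R)
  (rho : {measure set R -> \bar R})
  (HGnn : forall t s : R, 0 <= s -> s <= t -> 0 <= Gamma t s)
  (HGdiag : forall s : R, 0 <= s -> 0 < Gamma s s)
  (Hrho : forall b : R, 0 <= b -> (rho [set x : R | (0 <= x <= b)%R] < +oo)%E) :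
  preserves_nonneg Gamma <-> preserves_nonneg (Gamma_rho Gamma rho).
Proof.
pose F t := fine (rho [set x : R | (0 <= x <= t)%R]).
have key : forall t s, 0 <= s -> s <= t ->
    Gamma_rho Gamma rho t s = expR (- F t) * (Gamma t s * expR (F s)).
  move=> t s s0 st; rewrite /Gamma_rho rho_split //; last first.
    by apply: Hrho; exact: le_trans st.
  have -> : - (F t - F s) = - F t + F s by ring.
  rewrite expRD; ring.
split.
  apply: transfer (fun t => expR (- F t)) (fun s => expR (F s)) _ _ => //.
  by move=> t _; exact: expR_gt0.
apply: transfer (fun t => expR (F t)) (fun s => expR (- F s)) _ _ => //.
  by move=> t _; exact: expR_gt0.
move=> t s s0 st; rewrite key // !expRN.
have h1 := expR_gt0 (F t); have h2 := expR_gt0 (F s).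
field; apply/andP; split; exact: lt0r_neq0.
Qed.
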